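(* Let $f:\mathbb{R}^d\to\mathbb{R}$ be differentiable with $L$-Lipschitz gradient and $c$-strongly convex, with minimizer $\vec x^*$. Consider single-step SGD iterations (as defined in the context) with constant learning rate $\alpha\le\frac{1}{3L}$ satisfying elastic consistency with constant $B$. Then for every $t\ge0$, $$\mathbb{E}\|\vec x_{t+1}-\vec x^*\|^2\le\Big(1-\frac{\alpha c}{2}\Big)\mathbb{E}\|\vec x_t-\vec x^*\|^2+\frac{2\alpha^3B^2L^2}{c}+3\alpha^2\sigma^2+3\alpha^4L^2B^2.$$
   Context: $c$-strong convexity ($c>0$) means $(\vec x-\vec y)^\top(\nabla f(\vec x)-\nabla f(\vec y))\ge c\|\vec x-\vec y\|^2$ for all $\vec x,\vec y$. All random objects live on a probability space with a filtration $(\mathcal F_t)_{t\ge0}$. Single-step SGD iterations: $\vec x_0\in\mathbb{R}^d$ is deterministic. At each iteration $t\ge0$ some processor $i=i_t$ (chosen independently of the algorithm's randomness) holds a view $\vec v_t^{i}$. The vectors $\vec x_t,\vec v_t^{i}$ are $\mathcal F_t$-measurable, and the processor computes an $\mathcal F_{t+1}$-measurable stochastic gradient $\tilde G(\vec v_t^{i})$ with $\mathbb{E}[\tilde G(\vec v_t^{i})\mid\mathcal F_t]=\nabla f(\vec v_t^{i})$ and $\mathbb{E}[\|\tilde G(\vec v_t^{i})-\nabla f(\vec v_t^{i})\|^2\mid\mathcal F_t]\le\sigma^2$. Update: $\vec x_{t+1}=\vec x_t-\alpha\tilde G(\vec v_t^{i})$. Elastic consistency with constant $B>0$: $\mathbb{E}\|\vec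 x_t-\vec v_t^{i}\|^2\le\alpha^2B^2$ for every $t$ and the processor $i$ acting at $t$. *)

(* Defs.v *)
From HB Require Import structures.
From mathcomp Require Import all_boot all_order all_algebra.
From mathcomp Require Import all_classical all_reals all_analysis.
Set Implicit Arguments. Unset Strict Implicit. Unset Printing Implicit Defensive.
Import Order.TTheory GRing.Theory Num.Theory.
Import numFieldNormedType.Exports.
Local Open Scope classical_set_scope.
Local Open Scope ring_scope.

Definition vdot {R : realType} {d : nat} (u v : 'rV[R]_d) : R :=
  \sum_(i < d) u ord0 i * v ord0 i.

Definition sqnorm {R : realType} {d : nat} (u : 'rV[R]_d) : R := vdot u u.
Definition enorm {R : realType} {d : nat} (u : 'rV[R]_d) : R := Num.sqrt (sqnorm u).

Definition is_gradient {R : realType} {d : nat}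
  (f : 'rV[R]_d -> R) (grad : 'rV[R]_d -> 'rV[R]_d) : Prop :=
  forall x, differentiable f x /\ forall h, ('d f x) h = vdot (grad x) h.

Definition is_filtration {d0 : measure_display} {T : measurableType d0}
  (F : nat -> set (set T)) : Prop :=
  [/\ forall t, sigma_algebra setT (F t),
      forall t A, F t A -> measurable A &
      forall s t, (s <= t)%N -> F s `<=` F t].

Definition vmeasurable_wrt {d0 : measure_display} {T : measurableType d0}
  {R : realType} {d : nat} (G : set (set T)) (X : T -> 'rV[R]_d) : Prop :=
  forall (i : 'I_d) (B : set R), measurable B ->
    G ((fun w => X w ord0 i) @^-1` B).

(* E[X | G] = Y  (componentwise): X integrable, Y G-measurable and integrable,
   and the defining identity int_A X = int_A Y for every A in G. *)
Definition condexp_eq {d0 : measure_display} {T : measurableType d0}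
  {R : realType} {d : nat} (mu : probability T R) (G : set (set T))
  (X Y : T -> 'rV[R]_d) : Prop :=
  [/\ vmeasurable_wrt G Y,
      forall i : 'I_d, mu.-integrable setT (fun w => (X w ord0 i)%:E),
      forall i : 'I_d, mu.-integrable setT (fun w => (Y w ord0 i)%:E) &
      forall (i : 'I_d) (A : set T), G A ->
        (\int[mu]_(w in A) (X w ord0 i)%:E = \int[mu]_(w in A) (Y w ord0 i)%:E)%E].

(* E[ ||X - Y||^2 | G ] <= s  a.s., i.e. for every A in G,
   int_A ||X - Y||^2 <= s * P(A). *)
Definition condvar_le {d0 : measure_display} {T : measurableType d0}
  {R : realType} {d : nat} (mu : probability T R) (G : set (set T))
  (X Y : T -> 'rV[R]_d) (s : R) : Prop :=
  forall A : set T, G A ->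
    (\int[mu]_(w in A) (sqnorm (X w - Y w))%:E <= s%:E * mu A)%E.

Definition Esq {d0 : measure_display} {T : measurableType d0}
  {R : realType} {d : nat} (mu : probability T R) (X : T -> 'rV[R]_d) : \bar R :=
  (\int[mu]_w (sqnorm (X w))%:E)%E.

(* Main.v *)
Require Import Defs.
From HB Require Import structures.
From mathcomp Require Import all_boot all_order all_algebra.
From mathcomp Require Import all_classical all_reals all_analysis.
From mathcomp Require Import ring lra.
From mathcomp Require Import measurable_realfun.
Import Order.TTheory GRing.Theory Num.Theory.
Import numFieldNormedType.Exports.
Local Open Scope classical_set_scope.
Local Open Scope ring_scope.
Section Vec.
Context {R : realType} {d : nat}.
Implicit Types (u v w : 'rV[R]_d).

Lemma vdotE u v : vdot u v = \sum_(i < d) u ord0 i * v ord0 i.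
Proof. by []. Qed.

Lemma vdotC u v : vdot u v = vdot v u.
Proof. by rewrite /vdot; apply: eq_bigr => i _; rewrite mulrC. Qed.

Lemma vdotDl u v w : vdot (u + v) w = vdot u w + vdot v w.
Proof. by rewrite /vdot -big_split; apply: eq_bigr => i _; rewrite !mxE mulrDl. Qed.

Lemma vdotDr u v w : vdot w (u + v) = vdot w u + vdot w v.
Proof. by rewrite vdotC vdotDl !(vdotC w). Qed.

Lemma vdotZl (a : R) u v : vdot (a *: u) v = a * vdot u v.
Proof. by rewrite /vdot mulr_sumr; apply: eq_bigr => i _; rewrite !mxE mulrA. Qed.

Lemma vdotZr (a : R) u v : vdot u (a *: v) = a * vdot u v.
Proof. by rewrite vdotC vdotZl vdotC. Qed.

Lemma vdotNl u v : vdot (- u) v = - vdot u v.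
Proof. by rewrite -scaleN1r vdotZl mulN1r. Qed.

Lemma vdotNr u v : vdot u (- v) = - vdot u v.
Proof. by rewrite vdotC vdotNl vdotC. Qed.

Lemma vdotBl u v w : vdot (u - v) w = vdot u w - vdot v w.
Proof. by rewrite vdotDl vdotNl. Qed.

Lemma vdotBr u v w : vdot w (u - v) = vdot w u - vdot w v.
Proof. by rewrite vdotDr vdotNr. Qed.

Lemma sqnorm_ge0 u : 0 <= sqnorm u.
Proof. by rewrite /sqnorm /vdot; apply: sumr_ge0 => i _; rewrite -expr2 sqr_ge0. Qed.

Lemma sqnormB u v : sqnorm (u - v) = sqnorm u - 2 * vdot u v + sqnorm v.
Proof. rewrite /sqnorm !vdotBl !vdotBr (vdotC v u); ring. Qed.

Lemma sqnormN u : sqnorm (- u) = sqnorm u.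
Proof. by rewrite /sqnorm vdotNl vdotNr opprK. Qed.

Lemma sqnormZ (a : R) u : sqnorm (a *: u) = a ^+ 2 * sqnorm u.
Proof. by rewrite /sqnorm vdotZl vdotZr mulrA expr2. Qed.

Lemma young u v (k : R) : 0 < k -> 2 * vdot u v <= k * sqnorm u + k^-1 * sqnorm v.
Proof.
move=> k0; rewrite /sqnorm /vdot !mulr_sumr -big_split /=; apply: ler_sum => i _.
set a := u ord0 i; set b := v ord0 i.
have kk : k * k^-1 = 1 by rewrite divff // gt_eqF.
have : 0 <= k^-1 * (k * a - b) ^+ 2 by apply: mulr_ge0; [rewrite invr_ge0 ltW | rewrite sqr_ge0].
have -> : k^-1 * (k * a - b) ^+ 2 = (k * k^-1) * (k * a * a) - 2 * ((k * k^-1) * (a * b)) + k^-1 * (b * b) by ring.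
rewrite kk !mul1r => h; lra.
Qed.

Lemma sqnorm3 u v w : sqnorm (u + v + w) <= 3 * sqnorm u + 3 * sqnorm v + 3 * sqnorm w.
Proof.
rewrite /sqnorm /vdot !mulr_sumr -!big_split /=; apply: ler_sum => i _; rewrite !mxE.
set a := u ord0 i; set b := v ord0 i; set c := w ord0 i.
have h1 : 0 <= (a - b) ^+ 2 by apply: sqr_ge0.
have h2 : 0 <= (a - c) ^+ 2 by apply: sqr_ge0.
have h3 : 0 <= (b - c) ^+ 2 by apply: sqr_ge0.
nra.
Qed.

Lemma sqnorm_eq0 u : sqnorm u = 0 -> u = 0.
Proof.
rewrite /sqnorm /vdot => /eqP; rewrite psumr_eq0 => [/allP H|i _]; last by rewrite -expr2 sqr_ge0.
apply/rowP => i; rewrite mxE; have := H i (mem_index_enum _).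
by rewrite /= mulf_eq0 orbb => /eqP.
Qed.

Lemma enorm_sq u : enorm u ^+ 2 = sqnorm u.
Proof. by rewrite /enorm sqr_sqrtr // sqnorm_ge0. Qed.

Lemma lip_sq (L : R) u v : 0 <= L -> enorm u <= L * enorm v -> sqnorm u <= L ^+ 2 * sqnorm v.
Proof.
move=> L0 h; rewrite -!enorm_sq -exprMn; apply: lerXn2r => //; rewrite ?nnegrE ?mulr_ge0 ?sqrtr_ge0 //.
Qed.

End Vec.
Section Calc.
Context {R : realType} {d : nat}.
Variables (f : 'rV[R]_d -> R) (grad : 'rV[R]_d -> 'rV[R]_d).
Hypothesis Hg : is_gradient f grad.

Lemma line_derive (x h : 'rV[R]_d) (s : R) :
  is_derive s 1 (fun s => f (x + s *: h)) (vdot (grad (x + s *: h)) h).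
Proof.
have E : (fun r : R => r^-1 *: (((fun s => f (x + s *: h)) \o shift s) (r *: 1) - f (x + s *: h)))
   = (fun r : R => r^-1 *: ((f \o shift (x + s *: h)) (r *: h) - f (x + s *: h))).
  apply/funext => r /=; congr (_ *: (f _ - _)).
  rewrite /shift /=; by rewrite -[r *: 1]/(r * 1) mulr1 scalerDl addrCA.
have [df dfE] := Hg (x + s *: h).
have dv : derivable f (x + s *: h) h by apply: diff_derivable.
apply: DeriveDef.
  rewrite /derivable E; exact: dv.
by rewrite /derive E -/(derive f _ h) deriveE // dfE.
Qed.

Lemma kderive (x h : 'rV[R]_d) (a b s : R) :
  is_derive s 1 (fun s => f (x + s *: h) - s * a - b * (s * s))
    (vdot (grad (x + s *: h)) h - a - b * (2 * s)).
Proof.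
have H1 := line_derive x h s.
have H2 : is_derive s 1 (a \*: (@id R)) (a *: 1) by apply: is_deriveZ.
have H3 : is_derive s 1 (b \*: ((@id R) * (@id R))) (b *: (s *: 1 + s *: 1)).
  apply: is_deriveZ; exact: is_deriveM.
have := is_deriveB (is_deriveB H1 H2) H3.
set F := (_ - _ - _ : R -> R).
have -> : F = (fun s => f (x + s *: h) - s * a - b * (s * s)).
  apply/funext => r; rewrite /F -[LHS]/(f (x + r *: h) - a * r - b * (r * r)); by rewrite [a * r]mulrC.
move=> H; apply: is_derive_eq H _.
rewrite -[a *: 1]/(a * 1) -[s *: 1]/(s * 1) -[b *: _]/(b * _); ring.
Qed.
Variable L : R.
Hypothesis L0 : 0 < L.
Hypothesis Lip : forall y z, enorm (grad y - grad z) <= L * enorm (y - z).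

Lemma lipsq y z : sqnorm (grad y - grad z) <= L ^+ 2 * sqnorm (y - z).
Proof. by apply: lip_sq; [exact: ltW | exact: Lip]. Qed.

Lemma mvt01 (k dk : R -> R) (H : forall s : R, is_derive s (1:R) k (dk s)) :
  exists2 c, 0 < c < 1 & k 1 - k 0 = dk c.
Proof.

have cont : {within `[0, 1], continuous k}.
  apply: continuous_subspaceT => s; apply: differentiable_continuous.
  by apply/derivable1_diffP; case: (H s).
have [c cI E] := MVT (ltr01 : (0:R) < 1) (fun s _ => H s) cont.
exists c; first by rewrite in_itv /= in cI.
by rewrite E subr0 mulr1.
Qed.

Lemma descent x h : f (x + h) <= f x + vdot (grad x) h + L / 2 * sqnorm h.
Proof.
have [c /andP[c0 c1] E] := @mvt01 _ _ (kderive x h (vdot (grad x) h) (L / 2 * sqnorm h)).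
move: E; rewrite scale1r scale0r addr0 !mul0r !subr0 => E.
set p := grad (x + c *: h) - grad x.
have Lc0 : 0 < (L * c)^-1 by rewrite invr_gt0 mulr_gt0.
have Hy := young p h _ Lc0.
rewrite invrK in Hy.
have Hl := lipsq (x + c *: h) x.
rewrite addrAC subrr add0r sqnormZ in Hl.
have Hp : vdot p h = vdot (grad (x + c *: h)) h - vdot (grad x) h by rewrite /p vdotBl.
have Lc : 0 < L * c by apply: mulr_gt0.
have Hi : (L * c)^-1 * sqnorm p <= L * c * sqnorm h.
  rewrite -(ler_pM2l Lc) mulrA divff ?gt_eqF // mul1r.
  by apply: (le_trans Hl); rewrite le_eqVlt; apply/orP; left; apply/eqP; ring.
have : vdot p h <= L * c * sqnorm h by lra.
rewrite Hp => {}Hp.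
have Hs := sqnorm_ge0 h.
have : L * c * sqnorm h <= L * sqnorm h.
  rewrite -mulrA ler_pM2l // -[X in _ <= X]mul1r; apply: ler_wpM2r => //; exact: ltW.
nra.
Qed.
Variable cs : R.
Hypothesis cs0 : 0 < cs.
Hypothesis Mono : forall y z, vdot (y - z) (grad y - grad z) >= cs * sqnorm (y - z).

Lemma convexity x h : f x + vdot (grad x) h <= f (x + h).
Proof.
have [c /andP[c0 c1] E] := @mvt01 _ _ (line_derive x h).
move: E; rewrite scale1r scale0r addr0 => E.
have M := Mono (x + c *: h) x.
rewrite addrAC subrr add0r sqnormZ vdotZl vdotBr in M.
have : 0 <= vdot h (grad (x + c *: h)) - vdot h (grad x).
  have : 0 <= c * (vdot h (grad (x + c *: h)) - vdot h (grad x)).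
    apply: le_trans M; apply: mulr_ge0; [exact: ltW | apply: mulr_ge0; [exact: sqr_ge0 | exact: sqnorm_ge0]].
  by rewrite pmulr_rge0.
rewrite !(vdotC h); lra.
Qed.

Lemma cocoercive_half x y :
  f x + vdot (grad x) (y - x) + (2 * L)^-1 * sqnorm (grad y - grad x) <= f y.
Proof.
set q := grad y - grad x.
set z := y + (- L^-1) *: q.
have C := convexity x (z - x).
rewrite [x + (z - x)]addrC subrK in C.
have D := descent y ((- L^-1) *: q).
rewrite -/z in D.
rewrite vdotBr !vdotDr !vdotZr sqnormZ in C D.
rewrite sqrrN in D.
rewrite vdotBr.
have Eq : vdot (grad y) q - vdot (grad x) q = sqnorm q by rewrite /sqnorm -vdotBl.
have LL : L * L^-1 = 1 by rewrite divff // gt_eqF.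
have H2 : (2 * L)^-1 = L^-1 / 2 by rewrite invfM mulrC.
rewrite H2.
have Hq := sqnorm_ge0 q.
move: C D Eq; set a := vdot (grad x) x; set b := vdot (grad x) y; set g1 := vdot (grad y) q;
  set g2 := vdot (grad x) q; set S := sqnorm q; set l := L^-1 => C D Eq.
have : L / 2 * (l ^+ 2 * S) = l / 2 * S.
  by rewrite /l; field; rewrite gt_eqF.
have : l * g1 - l * g2 = l * S by rewrite -Eq; ring.
lra.
Qed.

Lemma cocoercive x y : sqnorm (grad y - grad x) <= L * vdot (y - x) (grad y - grad x).
Proof.
have H1 := cocoercive_half x y.
have H2 := cocoercive_half y x.
have E1 : sqnorm (grad x - grad y) = sqnorm (grad y - grad x) by rewrite -sqnormN opprB.
rewrite E1 in H2.
have : (2 * L)^-1 * sqnorm (grad y - grad x) * 2 <= vdot (y - x) (grad y - grad x).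
  have -> : vdot (y - x) (grad y - grad x) = - vdot (grad x) (y - x) - vdot (grad y) (x - y).
    rewrite !vdotBl !vdotBr !(vdotC (grad _)); ring.
  lra.
have -> : (2 * L)^-1 * sqnorm (grad y - grad x) * 2 = L^-1 * sqnorm (grad y - grad x).
  by field; rewrite gt_eqF.
by rewrite -(ler_pM2l L0) mulrA divff ?gt_eqF // mul1r.
Qed.

Variable xstar : 'rV[R]_d.
Hypothesis Hmin : forall y, f xstar <= f y.

Lemma grad_min : grad xstar = 0.
Proof.
apply: sqnorm_eq0; apply/eqP; rewrite eq_le sqnorm_ge0 andbT.
have D := descent xstar ((- L^-1) *: grad xstar).
have M := Hmin (xstar + (- L^-1) *: grad xstar).
rewrite vdotZr sqnormZ sqrrN in D.
set S := sqnorm (grad xstar) in D *.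
have : L / 2 * (L^-1 ^+ 2 * S) = L^-1 / 2 * S by field; rewrite gt_eqF.
have : 0 < L^-1 by rewrite invr_gt0.
move=> Li E; rewrite E in D.
change (vdot (grad xstar) (grad xstar)) with S in D.
have : L^-1 / 2 * S <= 0 by lra.
by rewrite pmulr_rle0 // divr_gt0.
Qed.
End Calc.
Lemma pointwise {R : realType} {d : nat} (a L c Sq : R) (e G g gx : 'rV[R]_d) :
  0 < a -> 0 < L -> 0 < c -> 3 * a * L <= 1 ->
  sqnorm (g - gx) <= L ^+ 2 * Sq ->
  sqnorm gx <= L * vdot e gx ->
  c * sqnorm e <= vdot e gx ->
  sqnorm (e - a *: G) <= (1 - a * c / 2) * sqnorm e
     + (2 * a * L ^+ 2 / c + 3 * a ^+ 2 * L ^+ 2) * Sq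
     + 3 * a ^+ 2 * sqnorm (G - g) - 2 * a * vdot e (G - g).
Proof.
move=> a0 L0 c0 aL Hp Hgx Hc.
set N := G - g; set p := g - gx.
have GE : G = N + p + gx by rewrite /N /p !addrA subrK subrK.
have E1 : sqnorm (e - a *: G) = sqnorm e - 2 * a * vdot e G + a ^+ 2 * sqnorm G.
  by rewrite sqnormB sqnormZ vdotZr mulrA.
have E2 : vdot e G = vdot e N + vdot e p + vdot e gx by rewrite GE !vdotDr.
have F1 := sqnorm3 N p gx; rewrite -GE in F1.
have c2 : 0 < c / 2 by rewrite divr_gt0.
have Y := young e (- p) _ c2.
rewrite vdotNr sqnormN invf_div in Y.
rewrite E1 E2.
have Se := sqnorm_ge0 e; have SN := sqnorm_ge0 N; have Sp := sqnorm_ge0 p.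
have eg0 : 0 <= vdot e gx by apply: le_trans Hc; apply: mulr_ge0; [exact: ltW | exact: sqnorm_ge0].
have F1' : a ^+ 2 * sqnorm G <= 3 * a ^+ 2 * sqnorm N + 3 * a ^+ 2 * sqnorm p + 3 * a ^+ 2 * sqnorm gx.
  have := ler_wpM2l (sqr_ge0 a) F1; lra.
have F2 : a * (- (2 * vdot e p)) <= a * (c / 2 * sqnorm e + 2 / c * sqnorm p).
  by rewrite ler_pM2l //; lra.
have F3 : 2 * a / c * sqnorm p <= 2 * a / c * (L ^+ 2 * Sq).
  by rewrite ler_pM2l // divr_gt0 // mulr_gt0.
have F4 : 3 * a ^+ 2 * sqnorm p <= 3 * a ^+ 2 * (L ^+ 2 * Sq).
  by rewrite ler_pM2l // mulr_gt0 // exprn_gt0.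
have F5 : 3 * a ^+ 2 * sqnorm gx <= 3 * a ^+ 2 * (L * vdot e gx).
  by rewrite ler_pM2l // mulr_gt0 // exprn_gt0.
have F6 : 3 * a ^+ 2 * (L * vdot e gx) <= a * vdot e gx.
  have -> : 3 * a ^+ 2 * (L * vdot e gx) = (3 * a * L) * (a * vdot e gx) by ring.
  by rewrite -[X in _ <= X]mul1r ler_wpM2r // mulr_ge0 // ltW.
have F7 : a * (c * sqnorm e) <= a * vdot e gx by rewrite ler_pM2l.
have X1 : a * (c / 2 * sqnorm e + 2 / c * sqnorm p) = a * c / 2 * sqnorm e + 2 * a / c * sqnorm p by ring.
have X2 : 2 * a / c * (L ^+ 2 * Sq) + 3 * a ^+ 2 * (L ^+ 2 * Sq) = (2 * a * L ^+ 2 / c + 3 * a ^+ 2 * L ^+ 2) * Sq by ring.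
lra.
Qed.
Section CondZero.
Context {d0 : measure_display} {T : measurableType d0} {R : realType}.
Variables (mu : measure T R) (G : set (set T)) (D : T -> R).
Hypothesis HGm : forall A, G A -> measurable A.
Hypothesis iD : mu.-integrable setT (EFin \o D).
Hypothesis D0 : forall A, G A -> (\int[mu]_(w in A) (D w)%:E = 0)%E.

Definition good (h : T -> R) :=
  mu.-integrable setT (fun w => (h w * D w)%:E) /\ (\int[mu]_w (h w * D w)%:E = 0)%E.

Lemma good_indic A : G A -> good (\1_A).
Proof.
move=> GA; have mA := HGm A GA.
have E : (fun w => (\1_A w * D w)%:E) = ((EFin \o D) \_ A).
  apply/funext => w; rewrite /patch indicE; case: (w \in A) => /=.
    by rewrite mul1r.
  by rewrite mul0r.
rewrite /good E; split.
  apply/(integrable_mkcond _ mA).1.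
  by apply: integrableS iD => //.
by rewrite -integral_mkcond D0.
Qed.

Lemma good_scale (c : R) h : good h -> good (fun w => c * h w).
Proof.
move=> [ih Ih]; have E : (fun w => (c * h w * D w)%:E) = (fun w => c%:E * (h w * D w)%:E)%E.
  by apply/funext => w; rewrite -mulrA EFinM.
rewrite /good E; split; first exact: integrableZl.
by rewrite integralZl // Ih mule0.
Qed.

Lemma good_add h1 h2 : good h1 -> good h2 -> good (fun w => h1 w + h2 w).
Proof.
move=> [i1 I1] [i2 I2].
have E : (fun w => ((h1 w + h2 w) * D w)%:E) = ((fun w => (h1 w * D w)%:E) \+ (fun w => (h2 w * D w)%:E))%E.
  by apply/funext => w; rewrite mulrDl EFinD.
rewrite /good E; split; first exact: integrableD.
by rewrite integralD // I1 I2 adde0.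
Qed.

Lemma good0 : good (fun _ => 0).
Proof.
have E : (fun w : T => ((0:R) * D w)%:E) = (fun _ => 0%E).
  by apply/funext => w; rewrite mul0r.
rewrite /good E; split; last exact: integral0.
exact: integrable0.
Qed.

Lemma good_sumn (F : nat -> T -> R) m : (forall k, good (F k)) ->
  good (fun w => \sum_(0 <= k < m) F k w).
Proof.
move=> HF; elim: m => [|m IH].
  have -> : (fun w => \sum_(0 <= k < 0) F k w) = (fun _ => 0) by apply/funext => w; rewrite big_geq.
  exact: good0.
have -> : (fun w => \sum_(0 <= k < m.+1) F k w) = (fun w => \sum_(0 <= k < m) F k w + F m w).
  by apply/funext => w; rewrite big_nat_recr.
exact: good_add.
Qed.

Variable Z : T -> R.
Hypothesis HZ : forall B, measurable B -> G (Z @^-1` B).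

Lemma good_approx n : good (approx setT (EFin \o Z) n).
Proof.
have -> : approx setT (EFin \o Z) n = (fun w => \sum_(0 <= k < n * 2 ^ n) (k%:R * 2 ^- n * \1_(dyadic_approx setT (EFin \o Z) n k) w) + n%:R * \1_(integer_approx setT (EFin \o Z) n) w).
  by apply/funext => w; rewrite /approx big_mkord.
apply: good_add; last first.
  apply: good_scale; apply: good_indic.
  have -> : integer_approx setT (EFin \o Z) n = Z @^-1` `[n%:R, +oo[.
    apply/seteqP; split => w /=; rewrite /integer_approx /= in_itv /= andbT lee_fin.
      by case.
    by move=> h; split.
  exact: (HZ _ (measurable_itv _)).
apply: good_sumn => k; apply: good_scale; apply: good_indic.
rewrite /dyadic_approx; case: ifPn => _; last first.
  have -> : (set0 : set T) = Z @^-1` set0 by [].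
  exact: (HZ _ measurable0).
have -> : setT `&` [set x | (EFin \o Z) x \in EFin @` [set` dyadic_itv R n k]] = Z @^-1` [set` dyadic_itv R n k].
  apply/seteqP; split => w /=.
    by case=> _; rewrite inE /= => -[r rI [<-]].
  by move=> wI; split => //; rewrite inE; exists (Z w).
exact: (HZ _ (measurable_itv _)).
Qed.

Lemma approx_ge0 n w : 0 <= approx setT (EFin \o Z) n w.
Proof.
rewrite /approx; apply: addr_ge0.
  apply: sumr_ge0 => k _; rewrite indicE; apply: mulr_ge0; last by case: (_ \in _).
  by apply: mulr_ge0; [exact: ler0n | rewrite invr_ge0 exprn_ge0].
by rewrite indicE; apply: mulr_ge0; [exact: ler0n | case: (_ \in _)].
Qed.

Lemma cond_zero_ge0 : (forall w, 0 <= Z w) ->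
  mu.-integrable setT (fun w => (Z w * D w)%:E) -> (\int[mu]_w (Z w * D w)%:E = 0)%E.
Proof.
move=> Zge0 iZD.
pose fn := fun n w => (approx setT (EFin \o Z) n w * D w)%:E.
have mf := fun n => measurable_int mu (good_approx n).1.
have Z0 : forall x, setT x -> (0 <= (EFin \o Z) x)%E by move=> x _; rewrite /= lee_fin.
have cv : forall x, setT x -> fn ^~ x @ \oo --> (Z x * D x)%:E.
  move=> x _; apply: cvg_EFin; first by near=> n.
  apply: cvgMl.
  have := cvg_approx Z0 (I : setT x) (ltry _); by [].
have dom : forall n x, setT x -> (`|fn n x| <= `|(Z x * D x)%:E|)%E.
  move=> n x _; rewrite /fn !abse_EFin lee_fin !normrM ler_wpM2r //.
  rewrite !ger0_norm ?approx_ge0 ?Zge0 //.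
  by have := le_approx n Z0 (I : setT x); rewrite lee_fin.
have gfin : forall x, setT x -> ((abse \o (fun w => (Z w * D w)%:E)) x \is a fin_num)%E.
  by move=> x _.
have H := dominated_cvg measurableT mf cv gfin (integrable_abse iZD) dom.
have E : (fun n => \int[mu]_(x in setT) fn n x)%E = (fun _ => 0%E).
  by apply/funext => n; exact: (good_approx n).2.
rewrite E in H.
exact: (cvg_unique _ H (cvg_cst _)).
Unshelve. all: by end_near.
Qed.

End CondZero.
Section CondZero2.
Context {d0 : measure_display} {T : measurableType d0} {R : realType}.
Variables (mu : measure T R) (G : set (set T)) (D : T -> R).
Hypothesis HGm : forall A, G A -> measurable A.
Hypothesis iD : mu.-integrable setT (EFin \o D).
Hypothesis D0 : forall A, G A -> (\int[mu]_(w in A) (D w)%:E = 0)%E.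

Lemma Gmeas_comp (Z : T -> R) (h : R -> R) : measurable_fun setT h ->
  (forall B, measurable B -> G (Z @^-1` B)) ->
  (forall B, measurable B -> G ((h \o Z) @^-1` B)).
Proof.
move=> mh HZ B mB; have := mh measurableT B mB; rewrite setTI => mhB.
by rewrite comp_preimage; exact: HZ.
Qed.

Lemma Gmeas_meas (Z : T -> R) : (forall B, measurable B -> G (Z @^-1` B)) ->
  measurable_fun setT Z.
Proof. by move=> HZ _ B mB; rewrite setTI; apply: HGm; exact: HZ. Qed.

Lemma cond_zero (Z : T -> R) : (forall B, measurable B -> G (Z @^-1` B)) ->
  mu.-integrable setT (fun w => (Z w * D w)%:E) -> (\int[mu]_w (Z w * D w)%:E = 0)%E.
Proof.
move=> HZ iZD.
pose zp := fun r : R => Num.max r 0.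
pose zn := fun r : R => Num.max (- r) 0.
have mzp : measurable_fun setT zp.
  by apply: (measurable_realfun.measurable_maxr (f := id) (g := cst 0)); [exact: measurable_id | exact: measurable_cst].
have mzn : measurable_fun setT zn.
  have -> : zn = (fun r : R => - r) \max (cst 0) by [].
  apply: measurable_realfun.measurable_maxr; [|exact: measurable_cst].
  exact: measurable_realfun.oppr_measurable.
have mD : measurable_fun setT D by apply/measurable_EFinP; exact: measurable_int iD.
have mZ := Gmeas_meas _ HZ.
have ig (h : R -> R) : measurable_fun setT h -> (forall r, `|h r| <= `|r|) ->
    mu.-integrable setT (fun w => (h (Z w) * D w)%:E).
  move=> mh hle; apply: le_integrable iZD => //.
    apply/measurable_EFinP; apply: measurable_funM => //.
    exact: measurableT_comp mh mZ.
  by move=> w _; rewrite !abse_EFin lee_fin !normrM ler_wpM2r.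
have hp : forall r, `|zp r| <= `|r|.
  move=> r; rewrite /zp; case: (leP r 0) => h; first by rewrite normr0.
  by [].
have hn : forall r, `|zn r| <= `|r|.
  move=> r; rewrite /zn; case: (leP (- r) 0) => h; first by rewrite normr0.
  by rewrite normrN.
have zp0 : forall w, 0 <= (zp \o Z) w by move=> w; rewrite /= /zp le_max lexx orbT.
have zn0 : forall w, 0 <= (zn \o Z) w by move=> w; rewrite /= /zn le_max lexx orbT.
have Ep := @cond_zero_ge0 _ _ _ mu G D HGm iD D0 _ (Gmeas_comp _ _ mzp HZ) zp0 (ig _ mzp hp).
have En := @cond_zero_ge0 _ _ _ mu G D HGm iD D0 _ (Gmeas_comp _ _ mzn HZ) zn0 (ig _ mzn hn).
have zpn r : zp r - zn r = r.
  rewrite /zp /zn; case: leP => h1; case: leP => h2; lra.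
have E : (fun w => (Z w * D w)%:E) = (fun w => (zp (Z w) * D w)%:E - (zn (Z w) * D w)%:E)%E.
  by apply/funext => w; rewrite -EFinB -mulrBl zpn.
rewrite E integralB //; [by rewrite Ep En sube0 | exact: ig | exact: ig].
Qed.
End CondZero2.
Section Meas.
Context {d0 : measure_display} {T : measurableType d0} {R : realType} {n : nat}.
Variable mu : measure T R.

Definition mcoord (P : T -> 'rV[R]_n) :=
  forall i : 'I_n, measurable_fun setT (fun w => P w ord0 i).

Lemma mcoordB P Q : mcoord P -> mcoord Q -> mcoord (fun w => P w - Q w).
Proof.
move=> mP mQ i; have -> : (fun w => (P w - Q w) ord0 i) = (fun w => P w ord0 i - Q w ord0 i).
  by apply/funext => w; rewrite !mxE.
exact: measurable_funB.
Qed.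

Lemma mcoordZ (a : R) P : mcoord P -> mcoord (fun w => a *: P w).
Proof.
move=> mP i; have -> : (fun w => (a *: P w) ord0 i) = (fun w => a * P w ord0 i).
  by apply/funext => w; rewrite !mxE.
by apply: measurable_funM => //; exact: measurable_cst.
Qed.

Lemma mcoordC (u : 'rV[R]_n) : mcoord (fun _ => u).
Proof. by move=> i; exact: measurable_cst. Qed.

Lemma mvdot P Q : mcoord P -> mcoord Q -> measurable_fun setT (fun w => vdot (P w) (Q w)).
Proof.
move=> mP mQ; rewrite /vdot.
apply: measurable_sum => i; exact: measurable_funM.
Qed.

Lemma msqnorm P : mcoord P -> measurable_fun setT (fun w => sqnorm (P w)).
Proof. by move=> mP; exact: mvdot. Qed.

Lemma int_ge0 (h : T -> R) : (forall w, 0 <= h w) -> measurable_fun setT h ->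
  (\int[mu]_w (h w)%:E < +oo)%E -> mu.-integrable setT (fun w => (h w)%:E).
Proof.
move=> h0 mh hlt; apply/integrableP; split; first exact/measurable_EFinP.
by under eq_integral do rewrite abse_EFin ger0_norm ?h0 //.
Qed.

End Meas.

Lemma coord_sq_le {R : realType} {n : nat} (u : 'rV[R]_n) i : u ord0 i ^+ 2 <= sqnorm u.
Proof.
rewrite /sqnorm /vdot (bigD1 i) //= -expr2 lerDl.
by apply: sumr_ge0 => j _; rewrite -expr2 sqr_ge0.
Qed.

Theorem mainTheorem6
  (R : realType) (d : nat)
  (f : 'rV[R]_d -> R) (grad : 'rV[R]_d -> 'rV[R]_d)
  (L c alpha B sigma : R) (xstar : 'rV[R]_d)
  (d0 : measure_display) (T : measurableType d0) (mu : probability T R)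
  (F : nat -> set (set T))
  (P : Type) (sched : nat -> P)
  (x0 : 'rV[R]_d)
  (x : nat -> T -> 'rV[R]_d)
  (v : nat -> P -> T -> 'rV[R]_d)
  (Gt : nat -> T -> 'rV[R]_d) :
  is_gradient f grad ->
  0 < L ->
  (forall y z, enorm (grad y - grad z) <= L * enorm (y - z)) ->
  0 < c ->
  (forall y z, vdot (y - z) (grad y - grad z) >= c * sqnorm (y - z)) ->
  (forall y, f xstar <= f y) ->
  0 < alpha -> alpha <= 1 / (3 * L) ->
  0 < B ->
  is_filtration F ->
  x 0%N = (fun _ => x0) ->
  (forall t, vmeasurable_wrt (F t) (x t)) ->
  (forall t, vmeasurable_wrt (F t) (v t (sched t))) ->
  (forall t, vmeasurable_wrt (F t.+1) (Gt t)) ->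
  (forall t, condexp_eq mu (F t) (Gt t) (fun w => grad (v t (sched t) w))) ->
  (forall t, condvar_le mu (F t) (Gt t) (fun w => grad (v t (sched t) w)) (sigma ^+ 2)) ->
  (forall t w, x t.+1 w = x t w - alpha *: Gt t w) ->
  (forall t, (Esq mu (fun w => (x t w - v t (sched t) w)%R) <= (alpha ^+ 2 * B ^+ 2)%:E)%E) ->
  forall t : nat,
    (Esq mu (fun w => (x t.+1 w - xstar)%R)
     <= (1 - alpha * c / 2)%:E * Esq mu (fun w => (x t w - xstar)%R)
        + (2 * alpha ^+ 3 * B ^+ 2 * L ^+ 2 / c + 3 * alpha ^+ 2 * sigma ^+ 2
           + 3 * alpha ^+ 4 * L ^+ 2 * B ^+ 2)%:E)%E.
Proof.
move=> Hgr L0 Lip c0 Mono Hmin a0 aL B0 HF _ Hxm Hvm _ Hce Hcv Hup Hel t.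
have [HFs HFm _] := HF.
have Fm : forall A, F t A -> measurable A by move=> A; exact: HFm.
have FT : F t setT.
  have [F0 FC _] := HFs t; have := FC set0 F0; by rewrite setD0.
have Gmin := grad_min f grad Hgr L L0 Lip xstar Hmin.
pose X := x t. pose V := v t (sched t). pose G := Gt t. pose g := fun w => grad (V w).
pose E := fun w => X w - xstar. pose N := fun w => G w - g w. pose Q := fun w => X w - V w.
have [_ iG ig Hint] := Hce t.
have mX : mcoord X.
  by move=> i _ Bs mB; rewrite setTI; apply: Fm; exact: Hxm.
have mV : mcoord V.
  by move=> i _ Bs mB; rewrite setTI; apply: Fm; exact: Hvm.
have mG : mcoord G by move=> i; apply/measurable_EFinP; exact: measurable_int (iG i).
have mg : mcoord g by move=> i; apply/measurable_EFinP; exact: measurable_int (ig i).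
have mE : mcoord E by apply: mcoordB => //; exact: mcoordC.
have mN : mcoord N by exact: mcoordB.
have mQ : mcoord Q by exact: mcoordB.
have aL3 : 3 * alpha * L <= 1.
  have L3 : 0 < 3 * L by rewrite mulr_gt0.
  move: aL; rewrite ler_pdivlMr // => h.
  by have -> : 3 * alpha * L = alpha * (3 * L) by ring.
pose K1 := 2 * alpha * L ^+ 2 / c + 3 * alpha ^+ 2 * L ^+ 2.
pose RHS := fun w => (1 - alpha * c / 2) * sqnorm (E w) + K1 * sqnorm (Q w)
     + 3 * alpha ^+ 2 * sqnorm (N w) - 2 * alpha * vdot (E w) (N w).
have PW : forall w, sqnorm (x t.+1 w - xstar) <= RHS w.
  move=> w; rewrite Hup.
  have -> : x t w - alpha *: Gt t w - xstar = E w - alpha *: G w by rewrite /E /G /X addrAC.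
  apply: (pointwise alpha L c (sqnorm (Q w)) (E w) (G w) (g w) (grad (X w)) a0 L0 c0 aL3).
  - have := lipsq grad L L0 Lip (V w) (X w); congr (_ <= _ * _).
    by rewrite /Q -sqnormN opprB.
  - have := cocoercive f grad Hgr L L0 Lip c c0 Mono xstar (X w).
    by rewrite Gmin subr0.
  - have := Mono (X w) xstar; by rewrite Gmin subr0.
have RHS0 : forall w, 0 <= RHS w by move=> w; exact: le_trans (sqnorm_ge0 _) (PW w).
have mSe : measurable_fun setT (fun w => sqnorm (E w)) by exact: msqnorm.
have mSq : measurable_fun setT (fun w => sqnorm (Q w)) by exact: msqnorm.
have mSN : measurable_fun setT (fun w => sqnorm (N w)) by exact: msqnorm.
have meN : measurable_fun setT (fun w => vdot (E w) (N w)) by exact: mvdot.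
have mRHS : measurable_fun setT RHS.
  apply: measurable_funB; last by apply: measurable_funM => //; exact: measurable_cst.
  apply: measurable_funD; last by apply: measurable_funM => //; exact: measurable_cst.
  by apply: measurable_funD; apply: measurable_funM => //; exact: measurable_cst.
have mLHS : measurable_fun setT (fun w => sqnorm (x t.+1 w - xstar)).
  have -> : (fun w => sqnorm (x t.+1 w - xstar)) = (fun w => sqnorm (E w - alpha *: G w)).
    by apply/funext => w; rewrite Hup /E /G /X addrAC.
  by apply: (@msqnorm _ _ _ _ (fun w => E w - alpha *: G w)); apply: mcoordB => //; exact: mcoordZ.
have LE : (Esq mu (fun w => (x t.+1 w - xstar)%R) <= \int[mu]_w (RHS w)%:E)%E.
  apply: ge0_le_integral => //.
  - by move=> w _; rewrite lee_fin sqnorm_ge0.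
  - exact/measurable_EFinP.
  - exact/measurable_EFinP.
  - by move=> w _; rewrite lee_fin.
change (Esq mu (fun w => x t w - xstar)) with (Esq mu E).
have Ege0 : (0 <= Esq mu E)%E by apply: integral_ge0 => w _; rewrite lee_fin sqnorm_ge0.
case Ee : (Esq mu E) => [r| |]; last by rewrite Ee in Ege0.
  have iSe : mu.-integrable setT (fun w => (sqnorm (E w))%:E).
    by apply: int_ge0 => //; [move=> w; exact: sqnorm_ge0 | rewrite -/(Esq mu E) Ee ltry].
  have iSq : mu.-integrable setT (fun w => (sqnorm (Q w))%:E).
    apply: int_ge0 => //; first by move=> w; exact: sqnorm_ge0.
    by apply: le_lt_trans (Hel t) _; rewrite ltry.
  have iSN : mu.-integrable setT (fun w => (sqnorm (N w))%:E).
    apply: int_ge0 => //; first by move=> w; exact: sqnorm_ge0.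
    have := Hcv t setT FT; rewrite probability_setT mule1 => h.
    by apply: le_lt_trans h _; rewrite ltry.
  have iB : mu.-integrable setT (fun w => (sqnorm (E w) + sqnorm (N w))%:E).
    have -> : (fun w => (sqnorm (E w) + sqnorm (N w))%:E) = ((fun w => (sqnorm (E w))%:E) \+ (fun w => (sqnorm (N w))%:E))%E.
      by apply/funext => w; rewrite EFinD.
    exact: integrableD.
  have ieN : mu.-integrable setT (fun w => (vdot (E w) (N w))%:E).
    apply: le_integrable iB => //; first exact/measurable_EFinP.
    move=> w _; rewrite !abse_EFin lee_fin.
    have Y1 := young (E w) (N w) 1 ltr01.
    have Y2 := young (E w) (- N w) 1 ltr01.
    rewrite vdotNr sqnormN invr1 !mul1r in Y1 Y2.
    rewrite (ger0_norm (addr_ge0 (sqnorm_ge0 _) (sqnorm_ge0 _))).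
    have := sqnorm_ge0 (E w); have := sqnorm_ge0 (N w).
    case: (lerP 0 (vdot (E w) (N w))) => h; [rewrite ger0_norm // | rewrite ltr0_norm //]; lra.
  have iEN i : mu.-integrable setT (fun w => (E w ord0 i * N w ord0 i)%:E).
    apply: le_integrable iB => //.
      by apply/measurable_EFinP; apply: measurable_funM; [exact: mE | exact: mN].
    move=> w _; rewrite !abse_EFin lee_fin.
    rewrite (ger0_norm (addr_ge0 (sqnorm_ge0 _) (sqnorm_ge0 _))).
    have h1 := coord_sq_le (E w) i; have h2 := coord_sq_le (N w) i.
    set a := E w ord0 i in h1 *; set b := N w ord0 i in h2 *.
    rewrite normrM; rewrite -(real_normK (num_real a)) in h1; rewrite -(real_normK (num_real b)) in h2.
    have := normr_ge0 a; have := normr_ge0 b; nra.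
  have eN0 : (\int[mu]_w (vdot (E w) (N w))%:E = 0)%E.
    have -> : (fun w => (vdot (E w) (N w))%:E) = (fun w => \sum_(i < d) (E w ord0 i * N w ord0 i)%:E)%E.
      by apply/funext => w; rewrite sumEFin.
    rewrite integral_sum //; apply: big1 => i _.
    have ND : (fun w => (N w ord0 i)%:E) = (fun w => (G w ord0 i)%:E - (g w ord0 i)%:E)%E.
      by apply/funext => w; rewrite /N !mxE EFinB.
    have mh : measurable_fun setT (fun r : R => r - xstar ord0 i).
      by apply: measurable_funB; [exact: measurable_id | exact: measurable_cst].
    apply: (cond_zero mu (F t) (fun w => N w ord0 i) Fm); last exact: iEN.
    - by rewrite /comp ND; apply: integrableB.
    - move=> A FA; have mA := Fm A FA.
      have iGA : mu.-integrable A (fun w => (G w ord0 i)%:E) by exact: integrableS (iG i).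
      have igA : mu.-integrable A (fun w => (g w ord0 i)%:E) by exact: integrableS (ig i).
      rewrite ND integralB // Hint // subee //; exact: integrable_fin_num.
    - have -> : (fun w => E w ord0 i) = (fun r : R => r - xstar ord0 i) \o (fun w => X w ord0 i).
        by apply/funext => w; rewrite /E /= !mxE.
      exact: (Gmeas_comp (F t) _ _ mh (Hxm t i)).
  apply: le_trans LE _.
  have iZ1 : mu.-integrable setT (fun w => ((1 - alpha * c / 2)%:E * (sqnorm (E w))%:E)%E) by exact: integrableZl.
  have iZ2 : mu.-integrable setT (fun w => (K1%:E * (sqnorm (Q w))%:E)%E) by exact: integrableZl.
  have iZ3 : mu.-integrable setT (fun w => ((3 * alpha ^+ 2)%:E * (sqnorm (N w))%:E)%E) by exact: integrableZl.
  have iZ4 : mu.-integrable setT (fun w => ((2 * alpha)%:E * (vdot (E w) (N w))%:E)%E) by exact: integrableZl.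
  have E1 : (fun w => (RHS w)%:E) = (fun w => ((1 - alpha * c / 2)%:E * (sqnorm (E w))%:E + K1%:E * (sqnorm (Q w))%:E + (3 * alpha ^+ 2)%:E * (sqnorm (N w))%:E) - (2 * alpha)%:E * (vdot (E w) (N w))%:E)%E.
    by apply/funext => w; rewrite /RHS EFinB !EFinD !EFinM.
  rewrite E1 integralB //; last first.
    by apply: integrableD => //; exact: integrableD.
  rewrite integralD //; last exact: integrableD.
  rewrite integralD // !integralZl // eN0 mule0 sube0.
  have IE : (\int[mu]_w (sqnorm (E w))%:E = r%:E)%E by exact: Ee.
  rewrite IE.
  have fq := integrable_fin_num measurableT iSq; have fn := integrable_fin_num measurableT iSN.
  have Hq := Hel t; change (Esq mu (fun w => x t w - v t (sched t) w)) with (\int[mu]_w (sqnorm (Q w))%:E)%E in Hq.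
  have Hn := Hcv t setT FT; rewrite probability_setT mule1 in Hn.
  move: Hq Hn fq fn.
  set IQ := (\int[mu]_w (sqnorm (Q w))%:E)%E.
  set IN := (\int[mu]_(w in setT) (sqnorm (G w - g w))%:E)%E.
  move=> Hq Hn fq fn.
  rewrite -(fineK fq) -(fineK fn) in Hq Hn *.
  rewrite !lee_fin in Hq Hn.
  rewrite -!EFinM -!EFinD lee_fin.
  have K10 : 0 <= K1.
    apply: addr_ge0.
      apply: divr_ge0; last exact: ltW.
      apply: mulr_ge0; last exact: (exprn_ge0 _ (ltW L0)).
      by apply: mulr_ge0 => //; exact: ltW.
    apply: mulr_ge0; last exact: (exprn_ge0 _ (ltW L0)).
    by apply: mulr_ge0 => //; exact: (exprn_ge0 _ (ltW a0)).
  have h1 : K1 * fine IQ <= K1 * (alpha ^+ 2 * B ^+ 2) by rewrite ler_wpM2l.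
  have h2 : 3 * alpha ^+ 2 * fine IN <= 3 * alpha ^+ 2 * sigma ^+ 2.
    by rewrite ler_wpM2l // mulr_ge0 // exprn_ge0 // ltW.
  have h3 : K1 * (alpha ^+ 2 * B ^+ 2) = 2 * alpha ^+ 3 * B ^+ 2 * L ^+ 2 / c + 3 * alpha ^+ 4 * L ^+ 2 * B ^+ 2.
    by rewrite /K1; field; rewrite gt_eqF.
  lra.
have cL : c <= L.
  have [[w hw]|nw] := pselect (exists w, sqnorm (E w) != 0).
    set u := E w.
    have M := Mono (u + xstar) xstar; rewrite addrK in M.
    have Y := young u (grad (u + xstar) - grad xstar) L L0.
    have Lp := lipsq grad L L0 Lip (u + xstar) xstar; rewrite addrK in Lp.
    have Su : 0 < sqnorm u by rewrite lt_def hw sqnorm_ge0.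
    have Li : L^-1 * (L ^+ 2 * sqnorm u) = L * sqnorm u by field; rewrite gt_eqF.
    have Lq : L^-1 * sqnorm (grad (u + xstar) - grad xstar) <= L^-1 * (L ^+ 2 * sqnorm u).
      by rewrite ler_pM2l ?invr_gt0.
    have : c * sqnorm u <= L * sqnorm u by lra.
    by rewrite ler_pM2r.
  exfalso; have : Esq mu E = 0%E.
    rewrite /Esq; under eq_integral => w _.
      have -> : sqnorm (E w) = 0.
        by apply/eqP; apply: contrapT => h; apply: nw; exists w; apply/negP.
      over.
    exact: integral0.
  by rewrite Ee.
have ac : 0 < 1 - alpha * c / 2.
  have : alpha * c <= alpha * L by rewrite ler_pM2l.
  lra.
by rewrite gt0_muley ?lte_fin // addye // leey.
Qed.
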